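(* Let $\alpha: I\to M$ be a unit-speed curve on an oriented surface $M\subset E^3$ with Darboux frame $\{T,V,U\}$ and curvatures $k_g,k_n,\tau_g$. Consider the curve $\gamma$ defined in either of the following two cases: (a) $k_g\equiv0$ and $k_n,\tau_g$ nowhere zero on $I$, and $\gamma(s)=\alpha(s)+\frac{k_n'(s)}{k_n(s)^2\tau_g(s)}V(s)+\frac{1}{k_n(s)}U(s)$; (b) $k_g$ nowhere zero on $I$, $c_3$ a real constant, $\psi$ an antiderivative of $k_n\tau_g/k_g$, $\Phi$ an antiderivative of $e^{-\psi}\tau_g/k_g$, and $$\gamma(s)=\alpha(s)+\Big(\frac{k_n}{k_g}e^{\psi}(\Phi-c_3)+\frac{1}{k_g}\Big)(s)\,V(s)+\big(e^{\psi}(c_3-\Phi)\big)(s)\,U(s).$$ In either case assume $\gamma$ is regular. Then $\gamma$ is a general helix if and only if $\alpha$ is a relatively normal-slant helix on $M$.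
   Context: $M$ is an oriented surface in Euclidean 3-space $E^3$ and $\alpha:I\to M$ is a unit-speed curve with arc-length parameter $s$. Its Darboux frame $\{T,V,U\}$ consists of the unit tangent $T=\alpha'$, the unit surface normal $U$ of $M$ along $\alpha$, and $V=U\times T$; it satisfies $T'=k_gV+k_nU$, $V'=-k_gT+\tau_gU$, $U'=-k_nT-\tau_gV$, where $k_g,k_n,\tau_g$ are the geodesic curvature, normal curvature and geodesic torsion. A regular curve is a general helix if its unit tangent makes a constant angle with a fixed direction. $\alpha$ is a relatively normal-slant helix if $\langle V,d\rangle$ is constant for some fixed unit vector $d$. *)

(* Defs.v *)
From Stdlib Require Import Reals.
From Coquelicot Require Import Coquelicot.
Open Scope R_scope.

Definition vec3 : Type := (R * R * R)%type.
Definition vx (v : vec3) : R := fst (fst v).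
Definition vy (v : vec3) : R := snd (fst v).
Definition vz (v : vec3) : R := snd v.
Definition mkv (x y z : R) : vec3 := (x, y, z).
Definition vadd (u v : vec3) : vec3 := mkv (vx u + vx v) (vy u + vy v) (vz u + vz v).
Definition vscal (a : R) (v : vec3) : vec3 := mkv (a * vx v) (a * vy v) (a * vz v).
Definition dot (u v : vec3) : R := vx u * vx v + vy u * vy v + vz u * vz v.
Definition cross (u v : vec3) : vec3 :=
  mkv (vy u * vz v - vz u * vy v) (vz u * vx v - vx u * vz v) (vx u * vy v - vy u * vx v).
Definition vnorm (v : vec3) : R := sqrt (dot v v).
Definition vzero : vec3 := mkv 0 0 0.

Definition in_I (a b : Rbar) (s : R) : Prop := Rbar_lt a s /\ Rbar_lt s b.

Definition is_vderive (f : R -> vec3) (s : R) (v : vec3) : Prop :=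
  is_derive (fun t => vx (f t)) s (vx v) /\
  is_derive (fun t => vy (f t)) s (vy v) /\
  is_derive (fun t => vz (f t)) s (vz v).
Definition ex_vderive (f : R -> vec3) (s : R) : Prop :=
  ex_derive (fun t => vx (f t)) s /\ ex_derive (fun t => vy (f t)) s /\
  ex_derive (fun t => vz (f t)) s.
Definition vDerive (f : R -> vec3) (s : R) : vec3 :=
  mkv (Derive (fun t => vx (f t)) s) (Derive (fun t => vy (f t)) s)
      (Derive (fun t => vz (f t)) s).

Definition smooth_on (a b : Rbar) (f : R -> R) : Prop :=
  forall n s, in_I a b s -> ex_derive (Derive_n f n) s.

(** Unit-speed curve alpha on an oriented surface M (with unit normal
    field N) together with its Darboux frame {T,V,U} and curvatures
    kg, kn, taug, satisfying the Darboux equations on I. *)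
Definition darboux_curve (a b : Rbar) (M : vec3 -> Prop) (N : vec3 -> vec3)
  (alpha T V U : R -> vec3) (kg kn taug : R -> R) : Prop :=
  (forall p, M p -> vnorm (N p) = 1) /\
  forall s, in_I a b s ->
    M (alpha s) /\
    is_vderive alpha s (T s) /\
    vnorm (T s) = 1 /\
    U s = N (alpha s) /\
    dot (T s) (U s) = 0 /\
    V s = cross (U s) (T s) /\
    is_vderive T s (vadd (vscal (kg s) (V s)) (vscal (kn s) (U s))) /\
    is_vderive V s (vadd (vscal (- kg s) (T s)) (vscal (taug s) (U s))) /\
    is_vderive U s (vadd (vscal (- kn s) (T s)) (vscal (- taug s) (V s))).

Definition regular_on (a b : Rbar) (g : R -> vec3) : Prop :=
  forall s, in_I a b s -> ex_vderive g s /\ vDerive g s <> vzero.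

Definition unit_tangent (g : R -> vec3) (s : R) : vec3 :=
  vscal (/ vnorm (vDerive g s)) (vDerive g s).

Definition general_helix (a b : Rbar) (g : R -> vec3) : Prop :=
  exists d : vec3, vnorm d = 1 /\
    exists c : R, forall s, in_I a b s -> dot (unit_tangent g s) d = c.

Definition rel_normal_slant_helix (a b : Rbar) (V : R -> vec3) : Prop :=
  exists d : vec3, vnorm d = 1 /\
    exists c : R, forall s, in_I a b s -> dot (V s) d = c.

Definition gammaA (alpha V U : R -> vec3) (kn taug : R -> R) (s : R) : vec3 :=
  vadd (alpha s)
   (vadd (vscal (Derive kn s / (kn s ^ 2 * taug s)) (V s))
         (vscal (/ kn s) (U s))).

Definition gammaB (alpha V U : R -> vec3) (kg kn : R -> R) (c3 : R)
  (psi Phi : R -> R) (s : R) : vec3 :=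
  vadd (alpha s)
   (vadd (vscal (kn s / kg s * exp (psi s) * (Phi s - c3) + / kg s) (V s))
         (vscal (exp (psi s) * (c3 - Phi s)) (U s))).

(* Main.v *)
Require Import Defs.
From Stdlib Require Import Reals Lra Classical Ranalysis5.
From Coquelicot Require Import Coquelicot.
Open Scope R_scope.
Lemma darboux_core (g g' : R -> R) x y : x < y ->
  (forall z, x <= z <= y -> is_derive g z (g' z)) ->
  (forall z, x <= z <= y -> g' z <> 0) -> 0 < g' x -> g' y < 0 -> False.
Proof.
  intros Hxy Hd Hn Hx Hy.
  assert (Hc : forall z, x <= z <= y -> continuity_pt g z).
  { intros z Hz. apply derivable_continuous_pt. exists (g' z).
    apply is_derive_Reals. apply Hd; exact Hz. }
  destruct (continuity_ab_maj g x y (Rlt_le _ _ Hxy) Hc) as [m [Hm Hmi]].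
  destruct (Req_dec m x) as [Emx|Nmx].
  - subst m. assert (HL := proj1 (is_derive_Reals _ _ _) (Hd x ltac:(lra))).
    destruct (HL (g' x / 2) ltac:(lra)) as [del Hdel].
    set (hh := Rmin (del/2) (y-x)).
    assert (hpos : 0 < hh). { unfold hh; apply Rmin_glb_lt; destruct del; simpl; lra. }
    assert (hle : hh <= y - x) by (unfold hh; apply Rmin_r).
    assert (hlt : hh < del). { assert (hh <= del/2) by (unfold hh; apply Rmin_l). destruct del; simpl in *; lra. }
    specialize (Hdel hh ltac:(lra) ltac:(rewrite Rabs_pos_eq; lra)).
    set (q := (g (x + hh) - g x) / hh) in Hdel.
    assert (Hq : g (x + hh) - g x = q * hh) by (unfold q; field; lra).
    apply Rabs_def2 in Hdel.
    assert (0 < q * hh) by (apply Rmult_lt_0_compat; lra).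
    specialize (Hm (x + hh) ltac:(lra)). lra.
  - destruct (Req_dec m y) as [Emy|Nmy].
    + subst m. assert (HL := proj1 (is_derive_Reals _ _ _) (Hd y ltac:(lra))).
      destruct (HL (- g' y / 2) ltac:(lra)) as [del Hdel].
      set (hh := Rmin (del/2) (y-x)).
      assert (hpos : 0 < hh). { unfold hh; apply Rmin_glb_lt; destruct del; simpl; lra. }
      assert (hle : hh <= y - x) by (unfold hh; apply Rmin_r).
      assert (hlt : hh < del). { assert (hh <= del/2) by (unfold hh; apply Rmin_l). destruct del; simpl in *; lra. }
      specialize (Hdel (- hh) ltac:(lra) ltac:(rewrite Rabs_Ropp, Rabs_pos_eq; lra)).
      set (q := (g (y + - hh) - g y) / - hh) in Hdel.
      assert (Hq : g (y + - hh) - g y = - (q * hh)) by (unfold q; field; lra).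
      apply Rabs_def2 in Hdel.
      assert (q * hh < 0).
      { assert (0 < (- q) * hh) by (apply Rmult_lt_0_compat; lra). lra. }
      specialize (Hm (y + - hh) ltac:(lra)). lra.
    + assert (Hpr : derivable_pt_lim g m (g' m)) by (apply is_derive_Reals, Hd; lra).
      assert (E := deriv_maximum g x y m (exist _ (g' m) Hpr) ltac:(lra) ltac:(lra)
        ltac:(intros; apply Hm; lra)).
      simpl in E. apply (Hn m); [lra|exact E].
Qed.

Lemma in_I_between a b x y z : in_I a b x -> in_I a b y -> x <= z <= y -> in_I a b z.
Proof.
  unfold in_I; destruct a, b; simpl; intuition lra.
Qed.

Lemma vec_eq (u v : vec3) : vx u = vx v -> vy u = vy v -> vz u = vz v -> u = v.
Proof. destruct u as [[x y] z], v as [[x' y'] z']; unfold vx, vy, vz; simpl; intros; subst; reflexivity. Qed.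

Lemma ex_derive_cont_pt (f : R -> R) x : ex_derive f x -> continuity_pt f x.
Proof. intro H. apply continuity_pt_filterlim. apply (ex_derive_continuous f x H). Qed.

Lemma is_derive_mulc (u : R -> R) s l k : is_derive u s l -> is_derive (fun t => u t * k) s (l * k).
Proof.
  intro H. eapply is_derive_ext; [intro t; apply Rmult_comm|].
  replace (l * k) with (k * l) by ring. apply (is_derive_scal u s k l H).
Qed.

Lemma dot_vderive (f : R -> vec3) s v d : is_vderive f s v ->
  is_derive (fun t => dot (f t) d) s (dot v d).
Proof.
  intros [H1 [H2 H3]]. unfold dot.
  apply (is_derive_plus (fun t => vx (f t) * vx d + vy (f t) * vy d) (fun t => vz (f t) * vz d)).
  apply (is_derive_plus (fun t => vx (f t) * vx d) (fun t => vy (f t) * vy d)).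
  all: apply is_derive_mulc; assumption.
Qed.

Lemma dot_ex_vderive (f : R -> vec3) s d : ex_vderive f s ->
  ex_derive (fun t => dot (f t) d) s.
Proof.
  intros [[l1 H1] [[l2 H2] [l3 H3]]].
  exists (dot (mkv l1 l2 l3) d). apply dot_vderive. split; [|split]; assumption.
Qed.

Lemma darboux_sign a b (g g' : R -> R) :
  (forall s, in_I a b s -> is_derive g s (g' s)) ->
  (forall s, in_I a b s -> g' s <> 0) ->
  (forall s, in_I a b s -> 0 < g' s) \/ (forall s, in_I a b s -> g' s < 0).
Proof.
  intros Hd Hn.
  destruct (classic (exists s0, in_I a b s0 /\ g' s0 < 0)) as [[s0 [Hs0 Hneg]]|Hno].
  - right. intros s Hs. destruct (Rtotal_order (g' s) 0) as [|[E|Hpos]]; auto.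
    + exfalso; exact (Hn s Hs E).
    + exfalso. destruct (Rtotal_order s s0) as [Hlt|[E|Hgt]].
      * apply (darboux_core g g' s s0 Hlt).
        -- intros z Hz; apply Hd; eapply in_I_between; [exact Hs|exact Hs0|exact Hz].
        -- intros z Hz; apply Hn; eapply in_I_between; [exact Hs|exact Hs0|exact Hz].
        -- exact Hpos.
        -- exact Hneg.
      * subst; lra.
      * apply (darboux_core (fun t => - g t) (fun t => - g' t) s0 s Hgt).
        -- intros z Hz. exact (is_derive_opp g z (g' z) (Hd z ltac:(eapply in_I_between; [exact Hs0|exact Hs|exact Hz]))).
        -- intros z Hz E. apply (Hn z); [eapply in_I_between; [exact Hs0|exact Hs|exact Hz]|lra].
        -- lra.
        -- lra.
  - left. intros s Hs. destruct (Rtotal_order (g' s) 0) as [Hl|[E|Hpos]]; auto.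
    + exfalso; apply Hno; exists s; auto.
    + exfalso; exact (Hn s Hs E).
Qed.

Lemma dot_scal_l k u d : dot (vscal k u) d = k * dot u d.
Proof. unfold dot, vscal, mkv, vx, vy, vz; simpl; ring. Qed.

Lemma vnorm_scal_unit k u : vnorm u = 1 -> vnorm (vscal k u) = Rabs k.
Proof.
  unfold vnorm. intro H.
  assert (Hp : 0 <= dot u u) by (unfold dot; nra).
  assert (Hu : dot u u = 1).
  { rewrite <- (sqrt_sqrt (dot u u) Hp), H; ring. }
  rewrite dot_scal_l.
  assert (E : dot u (vscal k u) = k * dot u u)
    by (unfold dot, vscal, mkv, vx, vy, vz; simpl; ring).
  rewrite E, Hu. rewrite <- sqrt_Rsqr_abs. f_equal. unfold Rsqr; ring.
Qed.

Lemma helix_core a b (gm V : R -> vec3) (h : R -> R) :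
  (forall s, in_I a b s -> is_vderive gm s (vscal (h s) (V s)) /\
       vnorm (V s) = 1 /\ ex_vderive V s) ->
  regular_on a b gm ->
  (general_helix a b gm <-> rel_normal_slant_helix a b V).
Proof.
  intros HG Hreg.
  assert (H1 : forall s, in_I a b s -> vDerive gm s = vscal (h s) (V s)).
  { intros s Hs. destruct (HG s Hs) as [[D1 [D2 D3]] _].
    unfold vDerive. apply vec_eq; unfold mkv, vx, vy, vz; simpl.
    all: apply is_derive_unique; assumption. }
  assert (H2 : forall s, in_I a b s -> h s <> 0).
  { intros s Hs E. apply (proj2 (Hreg s Hs)). rewrite H1 by exact Hs. rewrite E.
    unfold vscal, vzero, mkv. f_equal; [f_equal|]; ring. }
  assert (H3 : forall s d, in_I a b s ->
     dot (unit_tangent gm s) d = (h s / Rabs (h s)) * dot (V s) d).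
  { intros s d Hs. unfold unit_tangent. rewrite H1 by exact Hs.
    rewrite vnorm_scal_unit by (apply (HG s Hs)).
    rewrite !dot_scal_l. unfold Rdiv; ring. }
  assert (He : forall s, in_I a b s -> (h s / Rabs (h s) = 1 /\ 0 < h s) \/
                                      (h s / Rabs (h s) = -1 /\ h s < 0)).
  { intros s Hs. specialize (H2 s Hs). destruct (Rle_or_lt 0 (h s)).
    - left. rewrite Rabs_pos_eq by lra. split; [field|]; lra.
    - right. rewrite Rabs_left by lra. split; [field|]; lra. }
  split.
  - intros [d [Hd [c Hc]]]. exists d; split; [exact Hd|].
    set (f := fun t => dot (V t) d).
    destruct (Req_dec c 0) as [Ec|Nc].
    + exists 0. intros s Hs. specialize (Hc s Hs). rewrite H3 in Hc by exact Hs.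
      destruct (He s Hs) as [[E _]|[E _]]; rewrite E in Hc; lra.
    + destruct (classic (exists s0, in_I a b s0)) as [[s0 Hs0]|Hno].
      2:{ exists 0. intros s Hs; exfalso; apply Hno; exists s; exact Hs. }
      exists (f s0). intros s Hs. fold (f s).
      assert (Hf : forall t, in_I a b t -> f t = c \/ f t = - c).
      { intros t Ht. specialize (Hc t Ht). rewrite H3 in Hc by exact Ht. unfold f.
        destruct (He t Ht) as [[E _]|[E _]]; rewrite E in Hc; lra. }
      assert (Hcont : forall t, in_I a b t -> continuity_pt f t).
      { intros t Ht. apply ex_derive_cont_pt. apply dot_ex_vderive. apply (HG t Ht). }
      destruct (Req_dec (f s) (f s0)) as [E|N]; [exact E|exfalso].
      assert (Hopp : f s = - f s0 /\ f s0 <> 0).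
      { destruct (Hf s Hs), (Hf s0 Hs0); split; lra. }
      destruct Hopp as [Ho Hnz].
      assert (Hsq : 0 < f s0 * f s0) by nra.
      destruct (Rtotal_order s s0) as [Hlt|[E|Hgt]].
      * destruct (IVT_interv (fun t => f t * f s0) s s0) as [z [Hz Ez]].
        { intros t Ht. apply continuity_pt_mult; [|apply continuity_pt_const; intros ??; reflexivity].
          apply Hcont. eapply in_I_between; [exact Hs|exact Hs0|exact Ht]. }
        { exact Hlt. }
        { simpl. rewrite Ho. nra. }
        { simpl. nra. }
        simpl in Ez. assert (Hz0 : f z = 0).
        { apply Rmult_integral in Ez. destruct Ez; [assumption|contradiction]. }
        assert (Hzi : in_I a b z) by (eapply in_I_between; [exact Hs|exact Hs0|exact Hz]).
        destruct (Hf z Hzi); lra.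
      * subst; lra.
      * destruct (IVT_interv (fun t => - (f t * f s0)) s0 s) as [z [Hz Ez]].
        { intros t Ht. apply continuity_pt_opp.
          apply continuity_pt_mult; [|apply continuity_pt_const; intros ??; reflexivity].
          apply Hcont. eapply in_I_between; [exact Hs0|exact Hs|exact Ht]. }
        { exact Hgt. }
        { simpl. nra. }
        { simpl. rewrite Ho. nra. }
        simpl in Ez. assert (Hz0 : f z = 0).
        { assert (Ez' : f z * f s0 = 0) by lra.
          apply Rmult_integral in Ez'. destruct Ez'; [assumption|contradiction]. }
        assert (Hzi : in_I a b z) by (eapply in_I_between; [exact Hs0|exact Hs|exact Hz]).
        destruct (Hf z Hzi); lra.
  - intros [d [Hd [c Hc]]]. exists d; split; [exact Hd|].
    destruct (Req_dec c 0) as [Ec|Nc].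
    + exists 0. intros s Hs. rewrite H3, Hc by exact Hs. rewrite Ec; ring.
    + assert (Hder : forall s, in_I a b s ->
                is_derive (fun t => dot (gm t) d) s (h s * c)).
      { intros s Hs. rewrite <- (Hc s Hs), <- dot_scal_l. apply dot_vderive. apply (HG s Hs). }
      destruct (darboux_sign a b (fun t => dot (gm t) d) (fun t => h t * c) Hder) as [Hp|Hm].
      { intros s Hs. apply Rmult_integral_contrapositive_currified; auto. }
      * exists (Rabs c). intros s Hs. rewrite H3, Hc by exact Hs. specialize (Hp s Hs).
        destruct (He s Hs) as [[E Hh]|[E Hh]]; rewrite E.
        -- rewrite Rabs_pos_eq; [ring|nra].
        -- rewrite Rabs_left; [ring|nra].
      * exists (- Rabs c). intros s Hs. rewrite H3, Hc by exact Hs. specialize (Hm s Hs).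
        destruct (He s Hs) as [[E Hh]|[E Hh]]; rewrite E.
        -- rewrite Rabs_left; [ring|nra].
        -- rewrite Rabs_pos_eq; [ring|nra].
Qed.

Lemma is_derive_eqv (f : R -> R) s l l' : is_derive f s l -> l = l' -> is_derive f s l'.
Proof. intros H E; subst; exact H. Qed.

Lemma comp_lemma (A Vc Uc f g : R -> R) s a v u f' g' :
  is_derive A s a -> is_derive Vc s v -> is_derive Uc s u ->
  is_derive f s f' -> is_derive g s g' ->
  is_derive (fun t => A t + (f t * Vc t + g t * Uc t)) s
            (a + (f' * Vc s + f s * v + (g' * Uc s + g s * u))).
Proof.
  intros HA HV HU Hf Hg.
  apply (is_derive_plus A (fun t => f t * Vc t + g t * Uc t)); [exact HA|].
  apply (is_derive_plus (fun t => f t * Vc t) (fun t => g t * Uc t)).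
  - eapply is_derive_eqv; [apply (is_derive_mult f Vc s f' v Hf HV); intros n m; apply Rmult_comm|].
    simpl; unfold plus, mult; simpl; ring.
  - eapply is_derive_eqv; [apply (is_derive_mult g Uc s g' u Hg HU); intros n m; apply Rmult_comm|].
    simpl; unfold plus, mult; simpl; ring.
Qed.

Lemma comb_alg (Tc Vc Uc f g f' g' kg kn tg : R) :
  1 - f * kg - g * kn = 0 -> f * tg + g' = 0 ->
  Tc + (f' * Vc + f * (- kg * Tc + tg * Uc) + (g' * Uc + g * (- kn * Tc + - tg * Vc)))
  = (f' - g * tg) * Vc.
Proof.
  intros E1 E2. apply Rminus_diag_uniq.
  replace (Tc + (f' * Vc + f * (- kg * Tc + tg * Uc) + (g' * Uc + g * (- kn * Tc + - tg * Vc)))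
     - (f' - g * tg) * Vc) with (Tc * (1 - f * kg - g * kn) + Uc * (f * tg + g')) by ring.
  rewrite E1, E2; ring.
Qed.

Lemma deriv_comb (alpha T V U : R -> vec3) (kg kn taug f g : R -> R) s f' g' :
  is_vderive alpha s (T s) ->
  is_vderive V s (vadd (vscal (- kg s) (T s)) (vscal (taug s) (U s))) ->
  is_vderive U s (vadd (vscal (- kn s) (T s)) (vscal (- taug s) (V s))) ->
  is_derive f s f' -> is_derive g s g' ->
  1 - f s * kg s - g s * kn s = 0 -> f s * taug s + g' = 0 ->
  is_vderive (fun t => vadd (alpha t) (vadd (vscal (f t) (V t)) (vscal (g t) (U t)))) s
             (vscal (f' - g s * taug s) (V s)).
Proof.
  intros [A1 [A2 A3]] [V1 [V2 V3]] [U1 [U2 U3]] Hf Hg E1 E2.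
  split; [|split].
  - exact (is_derive_eqv _ _ _ _ (comp_lemma _ _ _ f g s _ _ _ f' g' A1 V1 U1 Hf Hg)
             (comb_alg _ _ _ _ _ _ _ _ _ _ E1 E2)).
  - exact (is_derive_eqv _ _ _ _ (comp_lemma _ _ _ f g s _ _ _ f' g' A2 V2 U2 Hf Hg)
             (comb_alg _ _ _ _ _ _ _ _ _ _ E1 E2)).
  - exact (is_derive_eqv _ _ _ _ (comp_lemma _ _ _ f g s _ _ _ f' g' A3 V3 U3 Hf Hg)
             (comb_alg _ _ _ _ _ _ _ _ _ _ E1 E2)).
Qed.

Lemma vnorm_cross_unit u t : vnorm u = 1 -> vnorm t = 1 -> dot t u = 0 -> vnorm (cross u t) = 1.
Proof.
  unfold vnorm. intros Hu Ht Htu.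
  assert (Hpu : 0 <= dot u u) by (unfold dot; nra).
  assert (Hpt : 0 <= dot t t) by (unfold dot; nra).
  assert (Eu : dot u u = 1) by (rewrite <- (sqrt_sqrt (dot u u) Hpu), Hu; ring).
  assert (Et : dot t t = 1) by (rewrite <- (sqrt_sqrt (dot t t) Hpt), Ht; ring).
  assert (E : dot (cross u t) (cross u t) = dot u u * dot t t - dot t u * dot t u)
    by (unfold dot, cross, mkv, vx, vy, vz; simpl; ring).
  rewrite E, Eu, Et, Htu. replace (1 * 1 - 0 * 0) with 1 by ring. apply sqrt_1.
Qed.

Theorem theorem3p14 :
  forall (a b : Rbar) (M : vec3 -> Prop) (N : vec3 -> vec3)
         (alpha T V U : R -> vec3) (kg kn taug : R -> R),
    Rbar_lt a b ->
    darboux_curve a b M N alpha T V U kg kn taug ->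
    smooth_on a b kg -> smooth_on a b kn -> smooth_on a b taug ->
    (* case (a) *)
    ((forall s, in_I a b s -> kg s = 0 /\ kn s <> 0 /\ taug s <> 0) ->
     regular_on a b (gammaA alpha V U kn taug) ->
     (general_helix a b (gammaA alpha V U kn taug) <->
      rel_normal_slant_helix a b V))
    /\
    (* case (b) *)
    (forall (c3 : R) (psi Phi : R -> R),
     (forall s, in_I a b s -> kg s <> 0) ->
     (forall s, in_I a b s -> is_derive psi s (kn s * taug s / kg s)) ->
     (forall s, in_I a b s -> is_derive Phi s (exp (- psi s) * taug s / kg s)) ->
     regular_on a b (gammaB alpha V U kg kn c3 psi Phi) ->
     (general_helix a b (gammaB alpha V U kg kn c3 psi Phi) <->
      rel_normal_slant_helix a b V)).
Proof.
  intros a b M N alpha T V U kg kn taug Hab [HN Hd] Hsg Hsn Hst.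
  assert (HV1 : forall s, in_I a b s -> vnorm (V s) = 1).
  { intros s Hs. destruct (Hd s Hs) as (HM & _ & HT & HU & HTU & HVc & _).
    rewrite HVc. apply vnorm_cross_unit; auto. rewrite HU; apply HN; exact HM. }
  assert (HVd : forall s, in_I a b s -> ex_vderive V s).
  { intros s Hs. destruct (Hd s Hs) as (_ & _ & _ & _ & _ & _ & _ & [V1 [V2 V3]] & _).
    split; [|split]; eexists; eassumption. }
  assert (Ekn : forall s, in_I a b s -> ex_derive kn s) by (intros s Hs; exact (Hsn 0%nat s Hs)).
  assert (Ekg : forall s, in_I a b s -> ex_derive kg s) by (intros s Hs; exact (Hsg 0%nat s Hs)).
  assert (Etg : forall s, in_I a b s -> ex_derive taug s) by (intros s Hs; exact (Hst 0%nat s Hs)).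
  assert (EDkn : forall s, in_I a b s -> ex_derive (Derive kn) s) by (intros s Hs; exact (Hsn 1%nat s Hs)).
  split.
  - intros Hk Hreg.
    apply (helix_core a b _ V (fun s => Derive (fun t => Derive kn t / (kn t ^ 2 * taug t)) s
                                         - / kn s * taug s)); [|exact Hreg].
    intros s Hs. split; [|split; auto].
    destruct (Hd s Hs) as (_ & HA & _ & _ & _ & _ & _ & HVV & HUU).
    destruct (Hk s Hs) as (Hg0 & Hn0 & Ht0).
    unfold gammaA.
    apply (deriv_comb alpha T V U kg kn taug (fun t => Derive kn t / (kn t ^ 2 * taug t))
             (fun t => / kn t) s _ (- Derive kn s / kn s ^ 2)); auto.
    + apply Derive_correct. apply ex_derive_mult; [auto|].
      apply ex_derive_inv.
      * apply ex_derive_mult; [apply ex_derive_pow|]; auto.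
      * apply Rmult_integral_contrapositive_currified; [apply pow_nonzero|]; auto.
    + apply is_derive_inv; [apply Derive_correct|]; auto.
    + rewrite Hg0; field; auto.
    + field; auto.
  - intros c3 psi Phi Hg Hpsi HPhi Hreg.
    apply (helix_core a b _ V (fun s => Derive (fun t => kn t / kg t * exp (psi t) * (Phi t - c3) + / kg t) s
                                         - exp (psi s) * (c3 - Phi s) * taug s)); [|exact Hreg].
    intros s Hs. split; [|split; auto].
    destruct (Hd s Hs) as (_ & HA & _ & _ & _ & _ & _ & HVV & HUU).
    specialize (Hg s Hs).
    unfold gammaB.
    apply (deriv_comb alpha T V U kg kn taug
             (fun t => kn t / kg t * exp (psi t) * (Phi t - c3) + / kg t)
             (fun t => exp (psi t) * (c3 - Phi t)) s _
             (exp (psi s) * (kn s * taug s / kg s) * (c3 - Phi s)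
               - exp (psi s) * (exp (- psi s) * taug s / kg s))); auto.
    + apply Derive_correct. auto_derive.
      repeat split; auto.
      * exists (kn s * taug s / kg s); apply Hpsi; exact Hs.
      * exists (exp (- psi s) * taug s / kg s); apply HPhi; exact Hs.
    + assert (H1 := Hpsi s Hs). assert (H2 := HPhi s Hs).
      auto_derive.
      * split; [exists (kn s * taug s / kg s); exact H1|split; [exists (exp (- psi s) * taug s / kg s); exact H2|exact I]].
      * replace (Derive (fun x : R => psi x) s) with (kn s * taug s / kg s) by (symmetry; apply is_derive_unique; exact H1).
        replace (Derive (fun x : R => Phi x) s) with (exp (- psi s) * taug s / kg s) by (symmetry; apply is_derive_unique; exact H2). ring.
    + field; auto.
    + rewrite exp_Ropp. field. split; auto. apply Rgt_not_eq, exp_pos.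
Qed.
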